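(* Let $\varrho\in C^2(\mathbb{C};\mathbb{C})$ be not $\mathbb{R}$-affine, $K\subseteq\mathbb{C}^2$ compact and $\varepsilon>0$. Then there exist $\mathbb{C}$-affine maps $\phi:\mathbb{C}^2\to\mathbb{C}^{12}$ and $\psi:\mathbb{C}^{12}\to\mathbb{C}$ such that at least one of the three inequalities $$\sup_{(z,w)\in K}|(\psi\circ\varrho^{\times12}\circ\phi)(z,w)-zw|<\varepsilon,\quad \sup_{(z,w)\in K}|(\psi\circ\varrho^{\times12}\circ\phi)(z,w)-z\overline{w}|<\varepsilon,\quad \sup_{(z,w)\in K}|(\psi\circ\varrho^{\times12}\circ\phi)(z,w)-\overline{zw}|<\varepsilon$$ holds.
   Context: $\varrho$ is $\mathbb{R}$-affine if it is affine as a map $\mathbb{R}^2\to\mathbb{R}^2$ under $\mathbb{C}\cong\mathbb{R}^2$. A map $\mathbb{C}^a\to\mathbb{C}^b$ is $\mathbb{C}$-affine if it has the form $z\mapsto Az+b$ with complex $A,b$. $\varrho^{\times12}$ applies $\varrho$ componentwise on $\mathbb{C}^{12}$. $C^2(\mathbb{C};\mathbb{C})$: continuous partial derivatives (real sense) up to order 2. *)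

(* Defs.v *)
From Stdlib Require Import Reals List.
From Coquelicot Require Import Coquelicot.
Open Scope R_scope.

Definition pdx (g : C -> R) (p : C) : R := Derive (fun t => g (t, snd p)) (fst p).
Definition pdy (g : C -> R) (p : C) : R := Derive (fun t => g (fst p, t)) (snd p).

Definition has_partials (g : C -> R) : Prop :=
  forall p : C, ex_derive (fun t => g (t, snd p)) (fst p) /\
                ex_derive (fun t => g (fst p, t)) (snd p).

Definition C2_real (g : C -> R) : Prop :=
  has_partials g /\ has_partials (pdx g) /\ has_partials (pdy g) /\
  forall p : C,
    continuous g p /\ continuous (pdx g) p /\ continuous (pdy g) p /\
    continuous (pdx (pdx g)) p /\ continuous (pdy (pdx g)) p /\
    continuous (pdx (pdy g)) p /\ continuous (pdy (pdy g)) p.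

Definition C2_complex (rho : C -> C) : Prop :=
  C2_real (fun p => fst (rho p)) /\ C2_real (fun p => snd (rho p)).

Definition R_affine (rho : C -> C) : Prop :=
  exists a11 a12 a21 a22 b1 b2 : R, forall x y : R,
    rho (x, y) = (a11 * x + a12 * y + b1, a21 * x + a22 * y + b2).

Definition compact2 (K : C * C -> Prop) : Prop :=
  forall (I : Type) (U : I -> C * C -> Prop),
    (forall i, open (U i)) ->
    (forall x, K x -> exists i, U i x) ->
    exists l : list I, forall x, K x -> exists i, In i l /\ U i x.

Fixpoint csum (n : nat) (f : nat -> C) : C :=
  match n with O => RtoC 0 | S m => Cplus (csum m f) (f m) end.

(* C-affine phi : C^2 -> C^12, phi(z,w)_i = A i 0 * z + A i 1 * w + b i (i < 12). *)
Definition affine_2_12 (A0 A1 b : nat -> C) (zw : C * C) : nat -> C :=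
  fun i => Cplus (Cplus (Cmult (A0 i) (fst zw)) (Cmult (A1 i) (snd zw))) (b i).

Definition affine_12_1 (c : nat -> C) (d : C) (u : nat -> C) : C :=
  Cplus (csum 12 (fun i => Cmult (c i) (u i))) d.

Definition network (rho : C -> C) (A0 A1 b c : nat -> C) (d : C) (zw : C * C) : C :=
  affine_12_1 c d (fun i => rho (affine_2_12 A0 A1 b zw i)).

Definition sup_lt (K : C * C -> Prop) (F G : C * C -> C) (eps : R) : Prop :=
  exists delta : R, delta < eps /\ forall zw, K zw -> Cmod (Cminus (F zw) (G zw)) <= delta.

(* Main.v *)
Require Import Defs.
From Stdlib Require Import Reals Lra Lia List Classical ZArith.
From Coquelicot Require Import Coquelicot.
Open Scope R_scope.
Lemma isd_minus (f g : R -> R) x df dg : is_derive f x df -> is_derive g x dg ->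
  is_derive (fun t => f t - g t) x (df - dg).
Proof. intros H1 H2. apply (is_derive_minus f g x df dg H1 H2). Qed.

Definition betw (x y s : R) := Rmin x y <= s <= Rmax x y.

Lemma betw_trans x y s r : betw x y s -> betw x s r -> betw x y r.
Proof. unfold betw, Rmin, Rmax; repeat destruct Rle_dec; lra. Qed.

Lemma betw_abs x h s : betw x (x+h) s -> Rabs (s - x) <= Rabs h.
Proof. unfold betw, Rmin, Rmax; intros H. unfold Rabs.
  repeat destruct Rle_dec; repeat destruct Rcase_abs; lra. Qed.

Lemma betw_l x y : betw x y x.
Proof. unfold betw, Rmin, Rmax; repeat destruct Rle_dec; lra. Qed.
Lemma betw_r x y : betw x y y.
Proof. unfold betw, Rmin, Rmax; repeat destruct Rle_dec; lra. Qed.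

Lemma incr_bound (phi dphi : R -> R) x0 h B :
  (forall s, betw x0 (x0+h) s -> is_derive phi s (dphi s)) ->
  (forall s, betw x0 (x0+h) s -> Rabs (dphi s) <= B) ->
  Rabs (phi (x0+h) - phi x0) <= B * Rabs h.
Proof.
  intros Hd Hb.
  destruct (MVT_gen phi x0 (x0+h) dphi) as [c [Hc Heq]].
  - intros x Hx. apply Hd. unfold betw. lra.
  - intros x Hx. apply continuity_pt_filterlim.
    apply (ex_derive_continuous (K:=R_AbsRing) (V:=R_NormedModule)).
    eexists. apply Hd. exact Hx.
  - rewrite Heq. replace (x0 + h - x0) with h by ring. rewrite Rabs_mult.
    apply Rmult_le_compat_r. apply Rabs_pos. apply Hb. exact Hc.
Qed.

Lemma taylor1 (g g1 g2 : R -> R) x0 h K e :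
  (forall s, betw x0 (x0+h) s -> is_derive g s (g1 s) /\ is_derive g1 s (g2 s)
      /\ Rabs (g2 s - K) <= e) ->
  Rabs (g (x0+h) - g x0 - h * g1 x0 - /2 * K * h^2) <= e * h^2.
Proof.
  intros H.
  assert (H1 : forall s, betw x0 (x0+h) s ->
     Rabs (g1 s - g1 x0 - K * (s - x0)) <= e * Rabs h).
  { intros s Hs.
    pose proof (incr_bound (fun t => g1 t - K * t) (fun t => g2 t - K) x0 (s - x0) e) as L.
    replace (x0 + (s - x0)) with s in L by ring.
    assert (Hs' := betw_abs _ _ _ Hs).
    eapply Rle_trans; [| apply Rmult_le_compat_l; [| exact Hs']].
    2:{ specialize (H x0 (betw_l _ _)). destruct H as [_ [_ H]].
        eapply Rle_trans; [apply Rabs_pos | exact H]. }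
    replace (g1 s - g1 x0 - K * (s - x0)) with (g1 s - K * s - (g1 x0 - K * x0)) by ring.
    apply L.
    - intros r Hr. apply isd_minus. apply H. eapply betw_trans; eauto.
      auto_derive; auto; ring.
    - intros r Hr. apply H. eapply betw_trans; eauto. }
  pose proof (incr_bound (fun s => g s - s * g1 x0 - /2 * K * (s - x0)^2)
     (fun s => g1 s - g1 x0 - K * (s - x0)) x0 h (e * Rabs h)) as L.
  assert (Hh : h^2 = Rabs h * Rabs h) by (rewrite <- Rabs_mult; rewrite Rabs_right; [ring| nra]).
  assert (HL : Rabs
    ((fun s : R => g s - s * g1 x0 - / 2 * K * (s - x0) ^ 2) (x0 + h) -
     (fun s : R => g s - s * g1 x0 - / 2 * K * (s - x0) ^ 2) x0) <=
    e * Rabs h * Rabs h).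
  { apply L.
  - intros s Hs. destruct (H s Hs) as [Hg _].
    apply isd_minus. apply isd_minus. exact Hg.
    + auto_derive; [exact I| apply Rmult_1_l].
    + auto_derive; [exact I| simpl; field].
  - exact H1. }
  cbv beta in HL.
  replace (e*h^2) with (e*Rabs h*Rabs h) by (rewrite Hh; ring).
  eapply Rle_trans; [|exact HL]. right. f_equal. ring.
Qed.

Lemma cont_box (g : C -> R) (p : C) e : continuous g p -> 0 < e ->
  exists d, 0 < d /\ forall q : C, Rabs (fst q - fst p) < d -> Rabs (snd q - snd p) < d ->
    Rabs (g q - g p) <= e.
Proof.
  intros Hc He.
  specialize (Hc (ball (g p) (mkposreal e He)) (locally_ball _ _)).
  destruct Hc as [d Hd]. exists d. split. apply cond_pos.
  intros q H1 H2. apply Rlt_le. apply (Hd q). split; assumption.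
Qed.

Lemma taylor2 f (Hf : C2_real f) a b e : 0 < e -> exists d, 0 < d /\
  forall h1 h2 m, Rabs h1 <= m -> Rabs h2 <= m -> m < d ->
  Rabs (f (a+h1, b+h2) - (f (a,b) + h1 * pdx f (a,b) + h2 * pdy f (a,b)
     + /2 * pdx (pdx f) (a,b) * h1^2 + pdy (pdx f) (a,b) * h1 * h2
     + /2 * pdy (pdy f) (a,b) * h2^2)) <= 3 * e * m^2.
Proof.
  intros He. destruct Hf as [P0 [P1 [P2 Hc]]].
  destruct (Hc (a,b)) as [_ [_ [_ [Cxx [Cyx [_ Cyy]]]]]].
  destruct (cont_box _ _ _ Cxx He) as [d1 [Hd1 D1]].
  destruct (cont_box _ _ _ Cyx He) as [d2 [Hd2 D2]].
  destruct (cont_box _ _ _ Cyy He) as [d3 [Hd3 D3]].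
  exists (Rmin d1 (Rmin d2 d3)). split.
  { apply Rmin_pos; auto. apply Rmin_pos; auto. }
  intros h1 h2 m Hm1 Hm2 Hmd.
  assert (m < d1 /\ m < d2 /\ m < d3) as [M1 [M2 M3]].
  { unfold Rmin in Hmd; repeat destruct Rle_dec; lra. }
  set (Kxx := pdx (pdx f) (a,b)). set (Kxy := pdy (pdx f) (a,b)).
  set (Kyy := pdy (pdy f) (a,b)).
  pose proof (taylor1 (fun t => f (t, b+h2)) (fun t => pdx f (t, b+h2))
     (fun t => pdx (pdx f) (t, b+h2)) a h1 Kxx e) as E1.
  lapply E1; clear E1; [intros E1|].
  2:{ intros s Hs. split; [|split].
    - exact (Derive_correct _ _ (proj1 (P0 (s, b+h2)))).
    - exact (Derive_correct _ _ (proj1 (P1 (s, b+h2)))).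
    - apply D1; simpl.
      + pose proof (betw_abs _ _ _ Hs); lra.
      + replace (b + h2 - b) with h2 by ring. lra. }
  pose proof (incr_bound (fun t => pdx f (a,t) - Kxy * t) (fun t => pdy (pdx f) (a,t) - Kxy)
     b h2 e) as E2.
  lapply E2; clear E2; [intros E2|].
  2:{ intros s Hs. apply isd_minus.
      + exact (Derive_correct _ _ (proj2 (P1 (a, s)))).
      + auto_derive; [exact I| simpl; ring]. }
  lapply E2; clear E2; [intros E2|].
  2:{ intros s Hs. apply D2; simpl.
      + replace (a - a) with 0 by ring. rewrite Rabs_R0. lra.
      + pose proof (betw_abs _ _ _ Hs); lra. }
  pose proof (taylor1 (fun t => f (a, t)) (fun t => pdy f (a,t))
     (fun t => pdy (pdy f) (a,t)) b h2 Kyy e) as E3.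
  lapply E3; clear E3; [intros E3|].
  2:{ intros s Hs. split; [|split].
    - exact (Derive_correct _ _ (proj2 (P0 (a, s)))).
    - exact (Derive_correct _ _ (proj2 (P2 (a, s)))).
    - apply D3; simpl.
      + replace (a - a) with 0 by ring. rewrite Rabs_R0. lra.
      + pose proof (betw_abs _ _ _ Hs); lra. }
  cbv beta in E1, E2, E3.
  set (X1 := f (a + h1, b + h2) - f (a, b + h2) - h1 * pdx f (a, b + h2) - / 2 * Kxx * h1 ^ 2) in *.
  set (X2 := pdx f (a, b + h2) - Kxy * (b + h2) - (pdx f (a, b) - Kxy * b)) in *.
  set (X3 := f (a, b + h2) - f (a, b) - h2 * pdy f (a, b) - / 2 * Kyy * h2 ^ 2) in *.
  replace (f (a + h1, b + h2) - (f (a, b) + h1 * pdx f (a, b) + h2 * pdy f (a, b) +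
     / 2 * Kxx * h1 ^ 2 + Kxy * h1 * h2 + / 2 * Kyy * h2 ^ 2))
    with (X1 + h1 * X2 + X3) by (unfold X1, X2, X3; ring).
  eapply Rle_trans. apply Rabs_triang.
  eapply Rle_trans. apply Rplus_le_compat_r. apply Rabs_triang.
  rewrite Rabs_mult.
  assert (0 <= Rabs h1) by apply Rabs_pos. assert (0 <= Rabs h2) by apply Rabs_pos.
  assert (Rabs h1 * Rabs X2 <= Rabs h1 * (e * Rabs h2)) by (apply Rmult_le_compat_l; auto).
  assert (h1^2 = Rabs h1 * Rabs h1) by (rewrite <- Rabs_mult; rewrite Rabs_right; [ring| nra]).
  assert (h2^2 = Rabs h2 * Rabs h2) by (rewrite <- Rabs_mult; rewrite Rabs_right; [ring| nra]).
  assert (Rabs h1 * Rabs h1 <= m * m) by nra.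
  assert (Rabs h2 * Rabs h2 <= m * m) by nra.
  assert (Rabs h1 * Rabs h2 <= m * m) by nra.
  nra.
Qed.

Lemma comb3 X Y Z G B1 B2 B3 : G = X - Y - Z -> Rabs X <= B1 -> Rabs Y <= B2 -> Rabs Z <= B3 ->
  Rabs G <= B1 + B2 + B3.
Proof.
  intros -> H1 H2 H3. unfold Rminus.
  eapply Rle_trans. apply Rabs_triang. rewrite Rabs_Ropp.
  eapply Rle_trans. apply Rplus_le_compat_r. apply Rabs_triang. rewrite Rabs_Ropp. lra.
Qed.

Lemma delta_real f (Hf : C2_real f) a b e : 0 < e -> exists d, 0 < d /\
  forall u1 u2 v1 v2 m, Rabs u1 <= m -> Rabs u2 <= m -> Rabs v1 <= m -> Rabs v2 <= m ->
  2 * m < d ->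
  Rabs (f (a + (u1 + v1), b + (u2 + v2)) - f (a + u1, b + u2) - f (a + v1, b + v2) + f (a, b)
     - (pdx (pdx f) (a,b) * u1 * v1 + pdy (pdx f) (a,b) * (u1 * v2 + u2 * v1)
        + pdy (pdy f) (a,b) * u2 * v2)) <= 18 * e * m^2.
Proof.
  intros He. destruct (taylor2 f Hf a b e He) as [d [Hd T]].
  exists d. split; auto.
  intros u1 u2 v1 v2 m H1 H2 H3 H4 Hm.
  assert (0 <= m) by (pose proof (Rabs_pos u1); lra).
  assert (A1 : Rabs (u1 + v1) <= 2 * m) by (pose proof (Rabs_triang u1 v1); lra).
  assert (A2 : Rabs (u2 + v2) <= 2 * m) by (pose proof (Rabs_triang u2 v2); lra).
  pose proof (T _ _ _ A1 A2 Hm) as T1.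
  assert (Hmd : m < d) by lra.
  pose proof (T _ _ _ H1 H2 Hmd) as T2.
  pose proof (T _ _ _ H3 H4 Hmd) as T3.
  eapply Rle_trans. eapply comb3; [| exact T1 | exact T2 | exact T3].
  field. nra.
Qed.

Lemma Cmod_le_sum (x : C) : Cmod x <= Rabs (fst x) + Rabs (snd x).
Proof.
  unfold Cmod. rewrite <- (sqrt_pow2 (Rabs (fst x) + Rabs (snd x))).
  2:{ pose proof (Rabs_pos (fst x)); pose proof (Rabs_pos (snd x)); lra. }
  apply sqrt_le_1_alt.
  assert (E1 : fst x ^ 2 = Rabs (fst x) ^ 2) by (unfold Rabs; destruct Rcase_abs; ring).
  assert (E2 : snd x ^ 2 = Rabs (snd x) ^ 2) by (unfold Rabs; destruct Rcase_abs; ring).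
  rewrite E1, E2.
  pose proof (Rabs_pos (fst x)); pose proof (Rabs_pos (snd x)); nra.
Qed.

Lemma le_eq_abs x y B : x = y -> Rabs y <= B -> Rabs x <= B.
Proof. intros ->; auto. Qed.

Definition Hxx (rho : C -> C) (p : C) : C :=
  (pdx (pdx (fun q => fst (rho q))) p, pdx (pdx (fun q => snd (rho q))) p).
Definition Hxy (rho : C -> C) (p : C) : C :=
  (pdy (pdx (fun q => fst (rho q))) p, pdy (pdx (fun q => snd (rho q))) p).
Definition Hyy (rho : C -> C) (p : C) : C :=
  (pdy (pdy (fun q => fst (rho q))) p, pdy (pdy (fun q => snd (rho q))) p).
Definition Hb (hx hxy hy u v : C) : C :=
  (hx * RtoC (fst u * fst v) + hxy * RtoC (fst u * snd v + snd u * fst v)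
   + hy * RtoC (snd u * snd v))%C.

Lemma delta_cplx rho (Hr : C2_complex rho) (a b e : R) : 0 < e -> exists d, 0 < d /\
  forall u v m, Rabs (fst u) <= m -> Rabs (snd u) <= m -> Rabs (fst v) <= m ->
  Rabs (snd v) <= m -> 2 * m < d ->
  Cmod (rho ((a + (fst u + fst v))%R, (b + (snd u + snd v))%R) - rho ((a + fst u)%R, (b + snd u)%R)
    - rho ((a + fst v)%R, (b + snd v)%R) + rho (a, b)
    - Hb (Hxx rho (a,b)) (Hxy rho (a,b)) (Hyy rho (a,b)) u v)%C <= 36 * e * m^2.
Proof.
  intros He. destruct Hr as [Hr1 Hr2].
  destruct (delta_real _ Hr1 a b e He) as [d1 [Hd1 D1]].
  destruct (delta_real _ Hr2 a b e He) as [d2 [Hd2 D2]].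
  exists (Rmin d1 d2). split. apply Rmin_pos; auto.
  intros u v m U1 U2 V1 V2 Hm.
  assert (2*m < d1 /\ 2*m < d2) as [M1 M2] by (unfold Rmin in Hm; destruct Rle_dec; lra).
  specialize (D1 _ _ _ _ _ U1 U2 V1 V2 M1). specialize (D2 _ _ _ _ _ U1 U2 V1 V2 M2).
  cbv beta in D1, D2.
  eapply Rle_trans. apply Cmod_le_sum.
  replace (36 * e * m^2) with (18 * e * m^2 + 18 * e * m^2) by ring.
  apply Rplus_le_compat.
  - eapply le_eq_abs; [| exact D1]. unfold Hb, Hxx, Hxy, Hyy. simpl. ring.
  - eapply le_eq_abs; [| exact D2]. unfold Hb, Hxx, Hxy, Hyy. simpl. ring.
Qed.

Definition S4 (x : C * C) : R := Rabs (fst (fst x)) + Rabs (snd (fst x))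
  + Rabs (fst (snd x)) + Rabs (snd (snd x)).

Lemma abs_near (x y eps : R) : Rabs (y - x) < eps -> Rabs y < Rabs x + eps.
Proof. intros H. replace y with (x + (y - x)) by ring.
  eapply Rle_lt_trans. apply Rabs_triang. lra. Qed.

Lemma open_S4 r : open (fun x => S4 x < r).
Proof.
  intros x Hx.
  assert (Hp : 0 < (r - S4 x) / 5) by lra.
  exists (mkposreal _ Hp). intros y Hy.
  destruct Hy as [[H1 H2] [H3 H4]].
  destruct x as [[x1 x2] [x3 x4]]; destruct y as [[y1 y2] [y3 y4]].
  unfold S4 in *; simpl in *.
  apply abs_near in H1. apply abs_near in H2. apply abs_near in H3. apply abs_near in H4.
  lra.
Qed.

Lemma exists_nat_gt (x : R) : exists n : nat, x < INR n.
Proof.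
  destruct (Rle_or_lt x 0) as [H|H].
  - exists 1%nat. simpl. lra.
  - destruct (archimed x) as [H1 _].
    exists (Z.to_nat (up x)). rewrite INR_IZR_INZ. rewrite Z2Nat.id. lra.
    apply le_IZR. lra.
Qed.

Fixpoint lsum (l : list nat) : R := match l with nil => 0 | cons n l' => INR n + lsum l' end.

Lemma lsum_ge (l : list nat) i : In i l -> INR i <= lsum l.
Proof.
  induction l as [|n l IH]; simpl. tauto.
  assert (0 <= lsum l).
  { clear IH. induction l; simpl. lra. pose proof (pos_INR a). lra. }
  intros [->|Hi]. lra. pose proof (pos_INR n). specialize (IH Hi). lra.
Qed.

Lemma compact_bounded K : compact2 K -> exists M, 0 < M /\ forall x, K x -> S4 x <= M.
Proof.
  intros HK.
  destruct (HK nat (fun n x => S4 x < INR n) (fun n => open_S4 _)) as [l Hl].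
  - intros x _. apply exists_nat_gt.
  - assert (0 <= lsum l).
    { clear Hl. induction l; simpl. lra. pose proof (pos_INR a). lra. }
    exists (1 + lsum l). split. lra.
    intros x Kx. destruct (Hl x Kx) as [i [Hi Hx]]. pose proof (lsum_ge l i Hi). lra.
Qed.

Lemma lin_of_deriv (g : R -> R) c : (forall t, is_derive g t c) -> forall x, g x = g 0 + c * x.
Proof.
  intros H x.
  pose proof (incr_bound (fun t => g t - c * t) (fun _ => 0) 0 x 0) as L.
  cbv beta in L. replace (0 + x) with x in L by ring.
  assert (Rabs (g x - c * x - (g 0 - c * 0)) <= 0 * Rabs x).
  { apply L.
    - intros s _. replace 0 with (c - c) by ring. apply isd_minus. apply H.
      auto_derive; [exact I| simpl; ring].
    - intros; rewrite Rabs_R0; lra. }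
  rewrite Rmult_0_l in H0. pose proof (Rabs_pos (g x - c * x - (g 0 - c * 0))).
  assert (Rabs (g x - c * x - (g 0 - c * 0)) = 0) by lra.
  apply Rabs_eq_0 in H2. lra.
Qed.

Lemma isd_eq (g : R -> R) t d c : is_derive g t d -> d = c -> is_derive g t c.
Proof. intros H ->; exact H. Qed.

Lemma affine_real f (Hf : C2_real f) :
  (forall p, pdx (pdx f) p = 0 /\ pdy (pdx f) p = 0 /\ pdy (pdy f) p = 0) ->
  exists a1 a2 c, forall x y, f (x, y) = a1 * x + a2 * y + c.
Proof.
  intros H. destruct Hf as [P0 [P1 [P2 _]]].
  assert (S1 : forall x y, pdx f (x,y) = pdx f (0,y)).
  { intros x y. rewrite (lin_of_deriv (fun t => pdx f (t,y)) 0). ring.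
    intros t. apply (isd_eq _ _ _ _ (Derive_correct _ _ (proj1 (P1 (t, y))))).
    exact (proj1 (H (t,y))). }
  assert (S2 : forall y, pdx f (0,y) = pdx f (0,0)).
  { intros y. rewrite (lin_of_deriv (fun t => pdx f (0,t)) 0). ring.
    intros t. apply (isd_eq _ _ _ _ (Derive_correct _ _ (proj2 (P1 (0, t))))).
    exact (proj1 (proj2 (H (0,t)))). }
  assert (S3 : forall x y, f (x,y) = f (0,y) + pdx f (0,0) * x).
  { intros x y. apply (lin_of_deriv (fun t => f (t,y)) (pdx f (0,0))).
    intros t. rewrite <- (S2 y), <- (S1 t y).
    exact (Derive_correct _ _ (proj1 (P0 (t, y)))). }
  assert (S4' : forall y, pdy f (0,y) = pdy f (0,0)).
  { intros y. rewrite (lin_of_deriv (fun t => pdy f (0,t)) 0). ring.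
    intros t. apply (isd_eq _ _ _ _ (Derive_correct _ _ (proj2 (P2 (0, t))))).
    exact (proj2 (proj2 (H (0,t)))). }
  assert (S5 : forall y, f (0,y) = f (0,0) + pdy f (0,0) * y).
  { intros y. apply (lin_of_deriv (fun t => f (0,t)) (pdy f (0,0))).
    intros t. rewrite <- (S4' t).
    exact (Derive_correct _ _ (proj2 (P0 (0, t)))). }
  exists (pdx f (0,0)), (pdy f (0,0)), (f (0,0)).
  intros x y. rewrite S3, S5. ring.
Qed.

Lemma pair0 (z : C) : z = RtoC 0 -> fst z = 0 /\ snd z = 0.
Proof. intros ->. simpl. auto. Qed.

Lemma hess_nonzero rho : C2_complex rho -> ~ R_affine rho ->
  exists p, Hxx rho p <> RtoC 0 \/ Hxy rho p <> RtoC 0 \/ Hyy rho p <> RtoC 0.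
Proof.
  intros [H1 H2] Hna. apply NNPP. intros Hn. apply Hna.
  assert (Z : forall p, Hxx rho p = RtoC 0 /\ Hxy rho p = RtoC 0 /\ Hyy rho p = RtoC 0).
  { intros p. destruct (classic (Hxx rho p = RtoC 0)); [|exfalso; eauto].
    destruct (classic (Hxy rho p = RtoC 0)); [|exfalso; eauto].
    destruct (classic (Hyy rho p = RtoC 0)); [|exfalso; eauto 6]. auto. }
  destruct (affine_real _ H1) as [a11 [a12 [b1 E1]]].
  { intros p. destruct (Z p) as [Za [Zb Zc]].
    apply pair0 in Za, Zb, Zc. unfold Hxx, Hxy, Hyy in *; simpl in *. tauto. }
  destruct (affine_real _ H2) as [a21 [a22 [b2 E2]]].
  { intros p. destruct (Z p) as [Za [Zb Zc]].
    apply pair0 in Za, Zb, Zc. unfold Hxx, Hxy, Hyy in *; simpl in *. tauto. }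
  exists a11, a12, a21, a22, b1, b2. intros x y.
  rewrite (surjective_pairing (rho (x,y))). f_equal. apply E1. apply E2.
Qed.

Definition tab (x0 x1 x2 x3 x4 x5 x6 x7 x8 x9 x10 x11 : C) (i : nat) : C :=
  match i with
  | 0 => x0 | 1 => x1 | 2 => x2 | 3 => x3 | 4 => x4 | 5 => x5
  | 6 => x6 | 7 => x7 | 8 => x8 | 9 => x9 | 10 => x10 | _ => x11 end.

Lemma alg12 (g0 g1 g2 g3 rp H0 H1 H2 H3 T : C) (r : nat -> C) :
  (g0 * H0 + g1 * H1 + g2 * H2 + g3 * H3 = T)%C ->
  Cminus (affine_12_1 (tab g0 (-g0) (-g0) g1 (-g1) (-g1) g2 (-g2) (-g2) g3 (-g3) (-g3))%C
     ((g0 + g1 + g2 + g3) * rp)%C r) T =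
  (g0 * (r 0%nat - r 1%nat - r 2%nat + rp - H0) + g1 * (r 3%nat - r 4%nat - r 5%nat + rp - H1)
   + g2 * (r 6%nat - r 7%nat - r 8%nat + rp - H2) + g3 * (r 9%nat - r 10%nat - r 11%nat + rp - H3))%C.
Proof. intros <-. unfold affine_12_1. cbn [csum tab]. ring. Qed.

Lemma arg_full (t a b : R) (mu la z w : C) :
  Cplus (Cplus (Cmult (RtoC t * mu)%C z) (Cmult (RtoC t * la)%C w)) (a, b) =
  ((a + (fst (RtoC t * (mu * z))%C + fst (RtoC t * (la * w))%C))%R,
   (b + (snd (RtoC t * (mu * z))%C + snd (RtoC t * (la * w))%C))%R).
Proof. destruct mu, la, z, w. unfold Cplus, Cmult, RtoC; simpl; f_equal; ring. Qed.

Lemma arg_l (t a b : R) (mu z w : C) :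
  Cplus (Cplus (Cmult (RtoC t * mu)%C z) (Cmult (RtoC 0) w)) (a, b) =
  ((a + fst (RtoC t * (mu * z))%C)%R, (b + snd (RtoC t * (mu * z))%C)%R).
Proof. destruct mu, z, w. unfold Cplus, Cmult, RtoC; simpl; f_equal; ring. Qed.

Lemma arg_r (t a b : R) (la z w : C) :
  Cplus (Cplus (Cmult (RtoC 0) z) (Cmult (RtoC t * la)%C w)) (a, b) =
  ((a + fst (RtoC t * (la * w))%C)%R, (b + snd (RtoC t * (la * w))%C)%R).
Proof. destruct la, z, w. unfold Cplus, Cmult, RtoC; simpl; f_equal; ring. Qed.

Lemma Hb_scal hx hm hy t u v :
  Hb hx hm hy (RtoC t * u) (RtoC t * v) = (RtoC (t^2) * Hb hx hm hy u v)%C.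
Proof. destruct hx, hm, hy, u, v. unfold Hb, Cplus, Cmult, RtoC; simpl; f_equal; ring. Qed.

Lemma comp_bound (t M : R) (mu z : C) : 0 <= t -> (mu = RtoC 1 \/ mu = Ci) ->
  Rabs (fst z) <= M -> Rabs (snd z) <= M ->
  Rabs (fst (RtoC t * (mu * z))%C) <= t * M /\ Rabs (snd (RtoC t * (mu * z))%C) <= t * M.
Proof.
  intros Ht Hmu H1 H2. destruct z as [z1 z2]. simpl in H1, H2.
  destruct Hmu as [-> | ->]; unfold Cmult, RtoC, Ci; simpl.
  - split.
    + replace (t * (1 * z1 - 0 * z2) - 0 * (1 * z2 + 0 * z1)) with (t * z1) by ring.
      rewrite Rabs_mult, Rabs_right by lra. apply Rmult_le_compat_l; auto.
    + replace (t * (1 * z2 + 0 * z1) + 0 * (1 * z1 - 0 * z2)) with (t * z2) by ring.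
      rewrite Rabs_mult, Rabs_right by lra. apply Rmult_le_compat_l; auto.
  - split.
    + replace (t * (0 * z1 - 1 * z2) - 0 * (0 * z2 + 1 * z1)) with (- (t * z2)) by ring.
      rewrite Rabs_Ropp, Rabs_mult, Rabs_right by lra. apply Rmult_le_compat_l; auto.
    + replace (t * (0 * z2 + 1 * z1) + 0 * (0 * z1 - 1 * z2)) with (t * z1) by ring.
      rewrite Rabs_mult, Rabs_right by lra. apply Rmult_le_compat_l; auto.
Qed.

Lemma sum4_bound (g0 g1 g2 g3 E0 E1 E2 E3 : C) G B :
  Cmod g0 <= G -> Cmod g1 <= G -> Cmod g2 <= G -> Cmod g3 <= G ->
  Cmod E0 <= B -> Cmod E1 <= B -> Cmod E2 <= B -> Cmod E3 <= B ->
  Cmod (g0 * E0 + g1 * E1 + g2 * E2 + g3 * E3)%C <= 4 * G * B.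
Proof.
  intros. 
  assert (forall g E, Cmod g <= G -> Cmod E <= B -> Cmod (g * E)%C <= G * B).
  { intros g E Hg HE. rewrite Cmod_mult. apply Rmult_le_compat; auto; apply Cmod_ge_0. }
  eapply Rle_trans; [apply Cmod_triangle|].
  eapply Rle_trans; [apply Rplus_le_compat_r; apply Cmod_triangle|].
  eapply Rle_trans; [apply Rplus_le_compat_r; apply Rplus_le_compat_r; apply Cmod_triangle|].
  pose proof (H7 _ _ H H3). pose proof (H7 _ _ H0 H4).
  pose proof (H7 _ _ H1 H5). pose proof (H7 _ _ H2 H6). lra.
Qed.

Lemma RtoC_nz (x : R) : x <> 0 -> RtoC x <> RtoC 0.
Proof. intros H E. apply (f_equal fst) in E. simpl in E. auto. Qed.

Lemma gbound (W N : C) (s : R) : Cmod W <= 1 -> N <> RtoC 0 -> 0 < s ->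
  Cmod (W * / (N * RtoC s))%C <= / (Cmod N * s).
Proof.
  intros HW HN Hs.
  assert (HNs : (N * RtoC s)%C <> RtoC 0).
  { intros E. apply (f_equal (fun x => Cmod x)) in E. rewrite Cmod_mult, Cmod_R, Cmod_0 in E.
    apply Cmod_gt_0 in HN. rewrite Rabs_right in E by lra. nra. }
  rewrite Cmod_mult, Cmod_inv by exact HNs. rewrite Cmod_mult, Cmod_R, Rabs_right by lra.
  apply Cmod_gt_0 in HN.
  assert (0 < / (Cmod N * s)) by (apply Rinv_0_lt_compat; nra).
  rewrite <- (Rmult_1_l (/ (Cmod N * s))) at 2. apply Rmult_le_compat_r; lra.
Qed.

Lemma main_gen rho (Hr : C2_complex rho) K (HK : compact2 K) eps (He : 0 < eps)
  (a b : R) (N W0 W1 W2 W3 : C) (T : C * C -> C) :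
  N <> RtoC 0 -> Cmod W0 <= 1 -> Cmod W1 <= 1 -> Cmod W2 <= 1 -> Cmod W3 <= 1 ->
  (forall zw : C * C,
    (W0 * Hb (Hxx rho (a,b)) (Hxy rho (a,b)) (Hyy rho (a,b)) (RtoC 1 * fst zw) (RtoC 1 * snd zw)
   + W1 * Hb (Hxx rho (a,b)) (Hxy rho (a,b)) (Hyy rho (a,b)) (Ci * fst zw) (RtoC 1 * snd zw)
   + W2 * Hb (Hxx rho (a,b)) (Hxy rho (a,b)) (Hyy rho (a,b)) (RtoC 1 * fst zw) (Ci * snd zw)
   + W3 * Hb (Hxx rho (a,b)) (Hxy rho (a,b)) (Hyy rho (a,b)) (Ci * fst zw) (Ci * snd zw)
    = N * T zw)%C) ->
  exists (A0 A1 bb c : nat -> C) (d : C), sup_lt K (network rho A0 A1 bb c d) T eps.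
Proof.
  intros HN HW0 HW1 HW2 HW3 Hid.
  destruct (compact_bounded K HK) as [M [HM HMb]].
  assert (HNp : 0 < Cmod N) by (apply Cmod_gt_0; exact HN).
  set (e := eps * Cmod N / (288 * M^2)).
  assert (He' : 0 < e).
  { unfold e. apply Rdiv_lt_0_compat. nra. nra. }
  destruct (delta_cplx rho Hr a b e He') as [d [Hd D]].
  set (t := d / (4 * M)).
  assert (Ht : 0 < t) by (unfold t; apply Rdiv_lt_0_compat; lra).
  assert (Ht2 : t^2 <> 0) by (apply pow_nonzero; lra).
  set (g0 := (W0 * / (N * RtoC (t^2)))%C).
  set (g1 := (W1 * / (N * RtoC (t^2)))%C).
  set (g2 := (W2 * / (N * RtoC (t^2)))%C).
  set (g3 := (W3 * / (N * RtoC (t^2)))%C).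
  set (m1 := (RtoC t * RtoC 1)%C). set (mi := (RtoC t * Ci)%C).
  exists (tab m1 m1 (RtoC 0) mi mi (RtoC 0) m1 m1 (RtoC 0) mi mi (RtoC 0)).
  exists (tab m1 (RtoC 0) m1 m1 (RtoC 0) m1 mi (RtoC 0) mi mi (RtoC 0) mi).
  exists (fun _ => (a, b)).
  exists (tab g0 (-g0) (-g0) g1 (-g1) (-g1) g2 (-g2) (-g2) g3 (-g3) (-g3))%C.
  exists ((g0 + g1 + g2 + g3) * rho (a, b))%C.
  exists (eps / 2). split. lra.
  intros zw Kzw.
  set (hx := Hxx rho (a,b)) in *. set (hm := Hxy rho (a,b)) in *. set (hy := Hyy rho (a,b)) in *.
  set (z := fst zw). set (w := snd zw).
  unfold network.
  rewrite (alg12 g0 g1 g2 g3 (rho (a,b))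
    (Hb hx hm hy (RtoC t * (RtoC 1 * z)) (RtoC t * (RtoC 1 * w)))
    (Hb hx hm hy (RtoC t * (Ci * z)) (RtoC t * (RtoC 1 * w)))
    (Hb hx hm hy (RtoC t * (RtoC 1 * z)) (RtoC t * (Ci * w)))
    (Hb hx hm hy (RtoC t * (Ci * z)) (RtoC t * (Ci * w))) (T zw)).
  2:{ rewrite !(Hb_scal hx hm hy t).
      transitivity (/ (N * RtoC (t^2)) * RtoC (t^2) *
        (W0 * Hb hx hm hy (RtoC 1 * z) (RtoC 1 * w) + W1 * Hb hx hm hy (Ci * z) (RtoC 1 * w)
         + W2 * Hb hx hm hy (RtoC 1 * z) (Ci * w) + W3 * Hb hx hm hy (Ci * z) (Ci * w)))%C.
      - unfold g0, g1, g2, g3. ring.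
      - unfold z, w. rewrite Hid. field. split; auto. apply RtoC_nz; auto. }
  unfold affine_2_12. cbn [tab]. cbv beta.
  unfold m1, mi.
  rewrite !arg_l, !arg_r, !arg_full.
  assert (HS := HMb zw Kzw). unfold S4 in HS.
  pose proof (Rabs_pos (fst (fst zw))). pose proof (Rabs_pos (snd (fst zw))).
  pose proof (Rabs_pos (fst (snd zw))). pose proof (Rabs_pos (snd (snd zw))).
  assert (Z1 : Rabs (fst (fst zw)) <= M) by lra. assert (Z2 : Rabs (snd (fst zw)) <= M) by lra.
  assert (W1' : Rabs (fst (snd zw)) <= M) by lra. assert (W2' : Rabs (snd (snd zw)) <= M) by lra.
  assert (HtM : t * M = d / 4) by (unfold t; field; lra).
  assert (Hm2 : 2 * (t * M) < d) by lra.
  assert (Ht0 : 0 <= t) by lra.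
  assert (Hone : RtoC 1 = RtoC 1 \/ RtoC 1 = Ci) by (left; reflexivity).
  assert (Hci : Ci = RtoC 1 \/ Ci = Ci) by (right; reflexivity).
  destruct (comp_bound t M (RtoC 1) (fst zw) Ht0 Hone Z1 Z2) as [B1 B2].
  destruct (comp_bound t M Ci (fst zw) Ht0 Hci Z1 Z2) as [B3 B4].
  destruct (comp_bound t M (RtoC 1) (snd zw) Ht0 Hone W1' W2') as [B5 B6].
  destruct (comp_bound t M Ci (snd zw) Ht0 Hci W1' W2') as [B7 B8].
  eapply Rle_trans.
  apply (sum4_bound _ _ _ _ _ _ _ _ (/ (Cmod N * t^2)) (36 * e * (t * M)^2)).
  - apply gbound; [auto | auto | apply pow_lt; lra].
  - apply gbound; [auto | auto | apply pow_lt; lra].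
  - apply gbound; [auto | auto | apply pow_lt; lra].
  - apply gbound; [auto | auto | apply pow_lt; lra].
  - apply D; auto.
  - apply D; auto.
  - apply D; auto.
  - apply D; auto.
  - right. rewrite HtM. unfold e, t. field. split; lra.
Qed.

Lemma Cmod_unit (x y : R) : x^2 + y^2 = 1 -> Cmod (x, y) <= 1.
Proof. intros H. unfold Cmod. simpl fst; simpl snd. rewrite H, sqrt_1. lra. Qed.

Lemma idA (hx hm hy : C) (zw : C * C) :
  (RtoC 1 * Hb hx hm hy (RtoC 1 * fst zw) (RtoC 1 * snd zw)
   + (- Ci) * Hb hx hm hy (Ci * fst zw) (RtoC 1 * snd zw)
   + (- Ci) * Hb hx hm hy (RtoC 1 * fst zw) (Ci * snd zw)
   + (- RtoC 1) * Hb hx hm hy (Ci * fst zw) (Ci * snd zw)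
   = (hx - hy - RtoC 2 * Ci * hm) * (fst zw * snd zw))%C.
Proof.
  destruct zw as [[z1 z2] [w1 w2]]; destruct hx, hm, hy.
  unfold Hb, Cplus, Cmult, Cminus, Copp, RtoC, Ci; simpl; f_equal; ring.
Qed.

Lemma idB (hx hm hy : C) (zw : C * C) :
  (RtoC 1 * Hb hx hm hy (RtoC 1 * fst zw) (RtoC 1 * snd zw)
   + (- Ci) * Hb hx hm hy (Ci * fst zw) (RtoC 1 * snd zw)
   + Ci * Hb hx hm hy (RtoC 1 * fst zw) (Ci * snd zw)
   + RtoC 1 * Hb hx hm hy (Ci * fst zw) (Ci * snd zw)
   = (hx + hy) * (fst zw * Cconj (snd zw)))%C.
Proof.
  destruct zw as [[z1 z2] [w1 w2]]; destruct hx, hm, hy.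
  unfold Hb, Cplus, Cmult, Cminus, Copp, RtoC, Ci, Cconj; simpl; f_equal; ring.
Qed.

Lemma idC (hx hm hy : C) (zw : C * C) :
  (RtoC 1 * Hb hx hm hy (RtoC 1 * fst zw) (RtoC 1 * snd zw)
   + Ci * Hb hx hm hy (Ci * fst zw) (RtoC 1 * snd zw)
   + Ci * Hb hx hm hy (RtoC 1 * fst zw) (Ci * snd zw)
   + (- RtoC 1) * Hb hx hm hy (Ci * fst zw) (Ci * snd zw)
   = (hx - hy + RtoC 2 * Ci * hm) * Cconj (fst zw * snd zw))%C.
Proof.
  destruct zw as [[z1 z2] [w1 w2]]; destruct hx, hm, hy.
  unfold Hb, Cplus, Cmult, Cminus, Copp, RtoC, Ci, Cconj; simpl; f_equal; ring.
Qed.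

Theorem proposition3p3 (rho : C -> C) (K : C * C -> Prop) (eps : R) :
  C2_complex rho -> ~ R_affine rho -> compact2 K -> 0 < eps ->
  exists (A0 A1 b c : nat -> C) (d : C),
    sup_lt K (network rho A0 A1 b c d) (fun zw => Cmult (fst zw) (snd zw)) eps \/
    sup_lt K (network rho A0 A1 b c d) (fun zw => Cmult (fst zw) (Cconj (snd zw))) eps \/
    sup_lt K (network rho A0 A1 b c d) (fun zw => Cconj (Cmult (fst zw) (snd zw))) eps.
Proof.
  intros Hr Hna HK He.
  destruct (hess_nonzero rho Hr Hna) as [[a b] Hnz].
  set (hx := Hxx rho (a,b)) in *. set (hm := Hxy rho (a,b)) in *. set (hy := Hyy rho (a,b)) in *.
  assert (U1 : Cmod (RtoC 1) <= 1) by (apply Cmod_unit; simpl; ring).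
  assert (U2 : Cmod (- Ci)%C <= 1) by (apply Cmod_unit; simpl; ring).
  assert (U3 : Cmod Ci <= 1) by (apply Cmod_unit; simpl; ring).
  assert (U4 : Cmod (- RtoC 1)%C <= 1) by (apply Cmod_unit; simpl; ring).
  destruct (classic ((hx - hy - RtoC 2 * Ci * hm)%C = RtoC 0)) as [EA|NA].
  2:{ destruct (main_gen rho Hr K HK eps He a b _ _ _ _ _ (fun zw => Cmult (fst zw) (snd zw))
        NA U1 U2 U2 U4 (idA hx hm hy)) as [A0 [A1 [bb [c [d H]]]]].
      exists A0, A1, bb, c, d. left. exact H. }
  destruct (classic ((hx + hy)%C = RtoC 0)) as [EB|NB].
  2:{ destruct (main_gen rho Hr K HK eps He a b _ _ _ _ _ (fun zw => Cmult (fst zw) (Cconj (snd zw)))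
        NB U1 U2 U3 U1 (idB hx hm hy)) as [A0 [A1 [bb [c [d H]]]]].
      exists A0, A1, bb, c, d. right. left. exact H. }
  destruct (classic ((hx - hy + RtoC 2 * Ci * hm)%C = RtoC 0)) as [EC|NC].
  2:{ destruct (main_gen rho Hr K HK eps He a b _ _ _ _ _ (fun zw => Cconj (Cmult (fst zw) (snd zw)))
        NC U1 U3 U3 U4 (idC hx hm hy)) as [A0 [A1 [bb [c [d H]]]]].
      exists A0, A1, bb, c, d. right. right. exact H. }
  exfalso. clearbody hx hm hy.
  destruct hx as [x1 x2], hm as [m1 m2], hy as [y1 y2].
  apply pair0 in EA, EB, EC.
  unfold Cplus, Cmult, Cminus, Copp, RtoC, Ci in EA, EB, EC; simpl in EA, EB, EC.
  destruct Hnz as [H|[H|H]]; apply H; unfold RtoC; f_equal; lra.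
Qed.
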